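(* Let $A$ be a commutative $\mathbb Q$-algebra, $a\in A$ a non-zero-divisor, $B=A[z]$ and $\mathcal D=\partial_z-a:B\to B$, $h\mapsto h'-ah$. Let $f=c_0+c_1z+\cdots+c_dz^d\in B$ with $v_a(c_i)\ge i+1$ for $0\le i\le d$. Then for every $g\in B$ we have $gf^m\in\mathrm{Im}\,\mathcal D$ for all sufficiently large $m$.
   Context: For $c\in A$, the $a$-order $v_a(c)\in\mathbb Z_{\ge0}\cup\{\infty\}$ is the supremum of the integers $m\ge0$ with $c\in Aa^m$ (so $v_a(c)=\infty$ if $c\in\bigcap_{m\ge1}Aa^m$). *)

(* Defs.v *)
From HB Require Import structures.
From mathcomp Require Import all_boot all_order all_algebra.
Set Implicit Arguments. Unset Strict Implicit. Unset Printing Implicit Defensive.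
Import GRing.Theory.
Local Open Scope ring_scope.

(* [va_ge a c n] : the a-order v_a(c) = sup { m >= 0 | c \in A a^m } is >= n,
   i.e. there is some m >= n with c \in A a^m. *)
Definition va_ge (A : comNzRingType) (a c : A) (n : nat) : Prop :=
  exists m : nat, (n <= m)%N /\ exists x : A, c = x * a ^+ m.

Definition nonzerodivisor (A : comNzRingType) (a : A) : Prop :=
  forall x : A, x * a = 0 -> x = 0.

Definition Dop (A : comNzRingType) (a : A) (h : {poly A}) : {poly A} :=
  h^`() - a%:P * h.

Definition in_ImD (A : comNzRingType) (a : A) (p : {poly A}) : Prop :=
  exists h : {poly A}, p = Dop a h.

(* Main.v *)
Require Import Defs.
From HB Require Import structures.
From mathcomp Require Import all_boot all_order all_algebra.
From Stdlib Require Import ClassicalEpsilon.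
Import GRing.Theory.
Local Open Scope ring_scope.
Set Implicit Arguments. Unset Strict Implicit.

Definition Pw (A : comNzRingType) (a : A) (p : {poly A}) (s : nat) : Prop :=
  forall i : nat, exists x : A, p`_i = x * a ^+ (i + s).

Lemma Pw_weak (A : comNzRingType) (a : A) (p : {poly A}) s t : Pw a p s -> (t <= s)%N -> Pw a p t.
Proof.
move=> H lt i; have [x ->] := H i; exists (x * a ^+ (s - t)).
by rewrite -mulrA -exprD addnCA subnK // addnC.
Qed.

Lemma Pw_mul (A : comNzRingType) (a : A) (p q : {poly A}) s t :
  Pw a p s -> Pw a q t -> Pw a (p * q) (s + t).
Proof.
move=> Hp Hq i; rewrite coefM.
apply: (big_ind (fun c => exists x, c = x * a ^+ (i + (s + t)))).
- by exists 0; rewrite mul0r.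
- by move=> _ _ [x ->] [y ->]; exists (x + y); rewrite mulrDl.
move=> [j /= ji] _; have [x ->] := Hp j; have [y ->] := Hq (i - j)%N.
exists (x * y); rewrite mulrACA -exprD; congr (_ * _ ^+ _).
rewrite ltnS in ji.
by rewrite addnACA subnKC.
Qed.

Lemma Pw_mulg (A : comNzRingType) (a : A) (g q : {poly A}) e :
  Pw a q e -> (size g <= e)%N -> Pw a (g * q) 0.
Proof.
move=> Hq le i; rewrite coefM.
apply: (big_ind (fun c => exists x, c = x * a ^+ (i + 0))).
- by exists 0; rewrite mul0r.
- by move=> _ _ [x ->] [y ->]; exists (x + y); rewrite mulrDl.
move=> [j /= ji] _.
case: (ltnP j (size g)) => hj; last first.
  by exists 0; rewrite nth_default // !mul0r.
have [y ->] := Hq (i - j)%N.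
exists (g`_j * y * a ^+ (i - j + e - (i + 0))%N).
have hle : (i + 0 <= i - j + e)%N.
  rewrite addn0 -(leq_add2r j) addnAC subnK // leq_add2l.
  exact: ltnW (leq_trans hj le).
by rewrite -!mulrA -exprD subnK.
Qed.

Lemma Pw_exp (A : comNzRingType) (a : A) (f : {poly A}) n : Pw a f 1 -> Pw a (f ^+ n) n.
Proof.
move=> Hf; elim: n => [|n IH].
  move=> i; exists (i == 0)%:R; rewrite expr0 coef1.
  by case: i => [|i] /=; rewrite ?mul0r // expr0 mulr1.
by rewrite exprS -add1n; apply: Pw_mul.
Qed.

Lemma Pw_ImD (A : comNzRingType) (a : A) n (p : {poly A}) :
  (size p <= n)%N -> Pw a p 1 -> in_ImD a p.
Proof.
elim: n p => [|n IH] p.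
  rewrite leqn0 size_poly_eq0 => /eqP -> _; exists 0.
  by rewrite /Dop deriv0 mulr0 subr0.
move=> sp Hp.
pose xs i := proj1_sig (constructive_indefinite_description _ (Hp i)).
have xsP i : p`_i = xs i * a ^+ (i + 1) := proj2_sig (constructive_indefinite_description _ (Hp i)).
pose r := \poly_(i < size p) (xs i * a ^+ i).
have pr : p = a%:P * r.
  apply/polyP => i; rewrite coefCM coef_poly.
  case: ifP => hi; last by rewrite mulr0 nth_default // leqNgt hi.
  by rewrite xsP mulrCA -exprS addn1.
have Hr' : Pw a r^`() 1.
  move=> i; rewrite coef_deriv coef_poly.
  case: ifP => _; last by exists 0; rewrite mul0rn mul0r.
  by exists (xs i.+1 *+ i.+1); rewrite mulrnAl addn1.
have [h hh] : in_ImD a r^`().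
  apply: IH Hr'.
  have [->|r0] := eqVneq r 0; first by rewrite deriv0 size_poly0.
  rewrite -ltnS (leq_trans (lt_size_deriv r0)) //.
  by rewrite (leq_trans (size_poly _ _)).
exists (h - r).
rewrite /Dop in hh; rewrite /Dop derivB mulrBr {1}pr hh.
by rewrite !opprB [h^`() + _]addrC subrK addrC subrK.
Qed.

Theorem corollary2p12 (A : comAlgType rat) (a : A) (f : {poly A}) :
  nonzerodivisor a ->
  (forall i : nat, va_ge a f`_i i.+1) ->
  forall g : {poly A}, exists N : nat, forall m : nat, (N <= m)%N ->
    in_ImD a (g * f ^+ m).
Proof.
move=> _ Hv g.
have Hf : Pw a f 1.
  move=> i; have [m [lm [x ->]]] := Hv i.
  exists (x * a ^+ (m - i.+1)); rewrite -mulrA -exprD addn1 subnK //.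
exists (size g).+1 => m lm.
have -> : g * f ^+ m = (g * f ^+ size g) * f ^+ (m - size g).
  by rewrite -mulrA -exprD subnKC // ltnW.
apply: (Pw_ImD (n := size (g * f ^+ size g * f ^+ (m - size g)))) => //.
apply: (Pw_weak (s := 0 + (m - size g))); last by rewrite add0n subn_gt0.
apply: Pw_mul; last exact: Pw_exp.
exact: (Pw_mulg (e := size g) (Pw_exp _ Hf)).
Qed.
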